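(* Let $a\in[-1,1/3]$, $a\neq0$. For $\theta\in(2\pi/3,\pi)$ define \[ \zeta(\theta)=\frac{(2a-1)\cos\theta+\sqrt{(1-4a)\cos^2\theta+a}}{1-4a\cos^2\theta},\qquad z(\theta)=\frac{a\zeta(\theta)}{(2\cos\theta+\zeta(\theta))(1+2\zeta(\theta)\cos\theta)}, \] where at the (possible) point $\theta=\cos^{-1}(-1/(2\sqrt a))$ (occurring when $1/4<a\le1/3$) $z$ is extended by continuity (this singularity is removable). Then $z(\theta)$ is increasing on $(2\pi/3,\pi)$. *)

(* Defs.v *)
From Stdlib Require Import Reals.
Open Scope R_scope.

Definition zeta (a t : R) : R :=
  ((2*a - 1) * cos t + sqrt ((1 - 4*a) * (cos t)^2 + a)) / (1 - 4*a*(cos t)^2).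

Definition zfun (a t : R) : R :=
  a * zeta a t / ((2 * cos t + zeta a t) * (1 + 2 * zeta a t * cos t)).

(* Main.v *)
Require Import Defs.
From Stdlib Require Import Reals.
From Stdlib Require Import Lra Psatz.
From Coquelicot Require Import Coquelicot.
Open Scope R_scope.

Definition Gp (a p : R) := a + (1+a)*p/2 + p^2/2 + p^3/8.
Definition rr (a t : R) := sqrt (1 - 4*a + a / (cos t)^2).
Definition Zf (a t : R) := Gp a (4*a / (rr a t - 1)).

Lemma cos_range t : 2*PI/3 < t < PI -> -1 < cos t < -1/2.
Proof.
  intros [h1 h2]. pose proof PI_RGT_0.
  split.
  - rewrite <- cos_PI. apply cos_decreasing_1; lra.
  - rewrite <- cos_2PI3. apply cos_decreasing_1; lra.
Qed.

Lemma X_pos a c : -1 <= a -> a <= 1/3 -> -1 < c < -1/2 -> 0 < 1 - 4*a + a / c^2.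
Proof.
  intros h1 h2 [hc1 hc2].
  assert (hD : 0 < (1-4*a)*c^2 + a).
  { assert (0 <= (1/3 - a)*(4*c^2 - 1)) by (apply Rmult_le_pos; nra).
    assert (c^2 < 1) by nra.
    replace ((1-4*a)*c^2 + a) with ((1 - c^2)/3 + (1/3 - a)*(4*c^2 - 1)) by field.
    lra. }
  assert (hc0 : c <> 0) by lra.
  replace (1 - 4*a + a / c^2) with (((1-4*a)*c^2 + a) / c^2) by (field; auto).
  apply Rdiv_lt_0_compat; nra.
Qed.

Lemma r_facts a c : -1 <= a -> a <= 1/3 -> a <> 0 -> -1 < c < -1/2 ->
  let r := sqrt (1 - 4*a + a / c^2) in
  0 < r /\ r^2 = 1 - 4*a + a/c^2 /\ a * (1 - 4*c^2) = (r^2 - 1)*c^2 /\ a * (r - 1) < 0.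
Proof.
  intros h1 h2 h0 hc r.
  pose proof (X_pos a c h1 h2 hc) as hX.
  assert (hr0 : 0 < r) by (apply sqrt_lt_R0; auto).
  assert (hr2 : r^2 = 1 - 4*a + a/c^2).
  { unfold r. rewrite <- Rsqr_pow2. apply Rsqr_sqrt. lra. }
  assert (hE : a * (1 - 4*c^2) = (r^2 - 1)*c^2).
  { assert (hc0 : c <> 0) by (destruct hc; lra). rewrite hr2. field. auto. }
  split; [auto|split; [auto|split; [auto|]]].
  assert (ha2 : 0 < a*a) by (apply Rsqr_pos_lt; auto).
  assert (h : a * ((r-1)*(r+1)) * c^2 < 0).
  { replace (a * ((r-1)*(r+1)) * c^2) with (a * (a * (1 - 4*c^2))) by (rewrite hE; ring).
    replace (a * (a * (1 - 4*c^2))) with (- ((a*a) * (4*c^2 - 1))) by ring.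
    assert (0 < 4*c^2 - 1) by (destruct hc; nra).
    assert (0 < (a*a) * (4*c^2 - 1)) by (apply Rmult_lt_0_compat; auto).
    lra. }
  assert (hp : 0 < (r+1)*c^2) by (apply Rmult_lt_0_compat; [lra| destruct hc; nra]).
  destruct (Rlt_or_le (a*(r-1)) 0) as [hh|hh]; auto.
  exfalso. assert (0 <= a*(r-1) * ((r+1)*c^2)) by (apply Rmult_le_pos; lra).
  replace (a * ((r-1)*(r+1)) * c^2) with (a*(r-1) * ((r+1)*c^2)) in h by ring.
  lra.
Qed.

Lemma ident a c : -1 <= a -> a <= 1/3 -> a <> 0 -> -1 < c < -1/2 -> 1 - 4*a*c^2 <> 0 ->
 Gp a (4*a / (sqrt (1 - 4*a + a/c^2) - 1)) =
 a * (((2*a - 1) * c + sqrt ((1 - 4*a) * c^2 + a)) / (1 - 4*a*c^2)) /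
 ((2 * c + ((2*a - 1) * c + sqrt ((1 - 4*a) * c^2 + a)) / (1 - 4*a*c^2)) *
  (1 + 2 * (((2*a - 1) * c + sqrt ((1 - 4*a) * c^2 + a)) / (1 - 4*a*c^2)) * c)).
Proof.
  intros h1 h2 h0 hc hA.
  destruct (r_facts a c h1 h2 h0 hc) as [hr0 [hr2 [hE har]]].
  set (r := sqrt (1 - 4*a + a / c^2)) in *.
  assert (hc0 : c <> 0) by (destruct hc; lra).
  assert (hK : 1 - 4*c^2 <> 0) by (destruct hc; nra).
  assert (hS : sqrt ((1 - 4*a) * c^2 + a) = -c*r).
  { replace ((1 - 4*a) * c^2 + a) with (Rsqr (-c*r)).
    - apply sqrt_Rsqr. destruct hc. nra.
    - unfold Rsqr. replace (-c*r*(-c*r)) with (c^2 * r^2) by ring. rewrite hr2. field. auto. }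
  rewrite hS.
  assert (hr1 : r - 1 <> 0) by (intro H; rewrite H in har; lra).
  assert (n5 : 2*c^2*(r+1) - 1 <> 0).
  { intro H. apply hA.
    apply (Rmult_eq_reg_r (1 - 4*c^2)); auto.
    replace ((1 - 4*a*c^2) * (1 - 4*c^2)) with
       (- (4*c^2*(a * (1 - 4*c^2) - (r^2 - 1)*c^2) + (2*c^2*(r-1)+1)*(2*c^2*(r+1) - 1))) by ring.
    replace (a * (1 - 4*c^2) - (r^2 - 1)*c^2) with 0 by (rewrite hE; ring).
    rewrite H. ring. }
  assert (ha : a = (r^2 - 1)*c^2/(1 - 4*c^2)) by (rewrite <- hE; field; auto).
  assert (nA : 1 - 4*c^2 - 4*((r^2 - 1)*c^2)*c^2 <> 0).
  { intro H. apply hA. rewrite ha.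
    apply (Rmult_eq_reg_r (1 - 4*c^2)); auto.
    replace ((1 - 4 * ((r ^ 2 - 1) * c ^ 2 / (1 - 4 * c ^ 2)) * c ^ 2) * (1 - 4 * c ^ 2))
      with (1 - 4*c^2 - 4*((r^2 - 1)*c^2)*c^2) by (field; auto).
    rewrite H. ring. }
  clearbody r. rewrite ha. unfold Gp.
  field.
  repeat split; auto.
  - intro H. apply n5.
    apply (Rmult_eq_reg_l (-(1 - 4*c^2))); [|intro H'; apply hK; lra].
    rewrite Rmult_0_r, <- H. ring.
  - intro H. apply n5.
    apply (Rmult_eq_reg_l (c*(1 - 4*c^2)*(r-1))).
    + rewrite Rmult_0_r, <- H. ring.
    + repeat apply Rmult_integral_contrapositive_currified; auto.
Qed.

Lemma mul_nonpos_pos x y : x <= 0 -> 0 <= y -> x * y <= 0.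
Proof. intros. assert (0 <= (-x)*y) by (apply Rmult_le_pos; lra). lra. Qed.

Lemma G_mono a w p1 p2 : 0 <= w -> w^2 = 1 - 3*a -> p1 < p2 -> p2 < -4*(1+w)/3 ->
  Gp a p1 < Gp a p2.
Proof.
  intros hw hw2 h12 h2.
  assert (ha : a = (1 - w^2)/3) by lra.
  set (q1 := -4*(1+w)/3 - p1). set (q2 := -4*(1+w)/3 - p2).
  assert (hq1 : 0 < q1) by (unfold q1; lra).
  assert (hq2 : 0 < q2) by (unfold q2; lra).
  assert (hK : 0 < w^2/2 + (w/2)*(q1+q2) + (q1^2+q1*q2+q2^2)/8).
  { assert (0 <= w^2/2) by nra. assert (0 <= (w/2)*(q1+q2)) by nra.
    assert (0 < q1^2+q1*q2+q2^2) by nra. lra. }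
  assert (hE : Gp a p2 - Gp a p1 = (p2 - p1) * (w^2/2 + (w/2)*(q1+q2) + (q1^2+q1*q2+q2^2)/8)).
  { unfold q1, q2, Gp. rewrite ha. field. }
  assert (0 < (p2 - p1) * (w^2/2 + (w/2)*(q1+q2) + (q1^2+q1*q2+q2^2)/8))
    by (apply Rmult_lt_0_compat; lra).
  lra.
Qed.

Lemma p_bound a c : -1 <= a -> a <= 1/3 -> a <> 0 -> -1 < c < -1/2 ->
  4*a / (sqrt (1 - 4*a + a/c^2) - 1) < -4*(1 + sqrt (1 - 3*a))/3.
Proof.
  intros h1 h2 h0 hc.
  destruct (r_facts a c h1 h2 h0 hc) as [hr0 [hr2 [hE har]]].
  set (r := sqrt (1 - 4*a + a / c^2)) in *.
  set (w := sqrt (1 - 3*a)).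
  assert (hw : 0 <= w) by apply sqrt_pos.
  assert (hw2 : w^2 = 1 - 3*a) by (unfold w; rewrite <- Rsqr_pow2; apply Rsqr_sqrt; lra).
  assert (hc0 : c <> 0) by (destruct hc; lra).
  assert (hr1 : r - 1 <> 0) by (intro H; rewrite H in har; lra).
  set (p := 4*a/(r-1)).
  assert (hp : p * (r-1) = 4*a) by (unfold p; field; auto).
  assert (hrw : 0 < a*(r-w)).
  { assert (e : a*((r-w)*(r+w)) * c^2 = (a*a) * (1 - c^2)).
    { replace ((r-w)*(r+w)) with (r^2 - w^2) by ring. rewrite hr2, hw2. field. auto. }
    assert (0 < (a*a)*(1-c^2)) by (apply Rmult_lt_0_compat; [apply Rsqr_pos_lt; auto| destruct hc; nra]).
    assert (hpos : 0 < (r+w)*c^2) by (apply Rmult_lt_0_compat; [lra| destruct hc; nra]).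
    destruct (Rlt_or_le 0 (a*(r-w))) as [hh|hh]; auto.
    exfalso. assert (a*(r-w)*((r+w)*c^2) <= 0).
    { apply mul_nonpos_pos; lra. }
    lra. }
  assert (hX : (p - -4*(1+w)/3) * (a*(r-1)) = 4*(1+w)/3 * (a*(r-w))).
  { replace ((p - -4*(1+w)/3) * (a*(r-1))) with (a * (p*(r-1)) + a * 4*(1+w)/3*(r-1)) by field.
    rewrite hp. replace (4*a) with (4*((1-w^2)/3)) by lra. field. }
  assert (0 < 4*(1+w)/3 * (a*(r-w))) by (apply Rmult_lt_0_compat; lra).
  destruct (Rlt_or_le p (-4*(1+w)/3)) as [hh|hh]; auto.
  exfalso. assert ((p - -4*(1+w)/3) * (a*(r-1)) <= 0).
  { rewrite Rmult_comm. apply mul_nonpos_pos; lra. }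
  lra.
Qed.

Lemma p_mono a c1 c2 : -1 <= a -> a <= 1/3 -> a <> 0 -> -1 < c1 < -1/2 -> -1 < c2 < -1/2 ->
  c2 < c1 ->
  4*a / (sqrt (1 - 4*a + a/c1^2) - 1) < 4*a / (sqrt (1 - 4*a + a/c2^2) - 1).
Proof.
  intros h1 h2 h0 hc1 hc2 h12.
  destruct (r_facts a c1 h1 h2 h0 hc1) as [hr0 [hr2 [hE har]]].
  destruct (r_facts a c2 h1 h2 h0 hc2) as [hs0 [hs2 [hF has]]].
  set (r := sqrt (1 - 4*a + a / c1^2)) in *.
  set (s := sqrt (1 - 4*a + a / c2^2)) in *.
  assert (hc10 : c1 <> 0) by (destruct hc1; lra).
  assert (hc20 : c2 <> 0) by (destruct hc2; lra).
  assert (hr1 : r - 1 <> 0) by (intro H; rewrite H in har; lra).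
  assert (hs1 : s - 1 <> 0) by (intro H; rewrite H in has; lra).
  assert (haa : 0 < a*a) by (apply Rsqr_pos_lt; auto).
  assert (hrs : 0 < a*(r-s)).
  { assert (e : a*((r-s)*(r+s)) * (c1^2*c2^2) = (a*a) * (c2^2 - c1^2)).
    { replace ((r-s)*(r+s)) with (r^2 - s^2) by ring. rewrite hr2, hs2. field. auto. }
    assert (0 < (a*a)*(c2^2-c1^2)) by (apply Rmult_lt_0_compat; [auto| destruct hc1, hc2; nra]).
    assert (hpos : 0 < (r+s)*(c1^2*c2^2)).
    { apply Rmult_lt_0_compat; [lra|]. apply Rmult_lt_0_compat; destruct hc1, hc2; nra. }
    destruct (Rlt_or_le 0 (a*(r-s))) as [hh|hh]; auto.
    exfalso. assert (a*(r-s)*((r+s)*(c1^2*c2^2)) <= 0).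
    { apply mul_nonpos_pos; lra. }
    replace (a*((r-s)*(r+s)) * (c1^2*c2^2)) with (a*(r-s)*((r+s)*(c1^2*c2^2))) in e by ring.
    lra. }
  assert (hq : 0 < (r-1)*(s-1)).
  { assert (e : 0 < (a*(r-1))*(a*(s-1))).
    { replace ((a*(r-1))*(a*(s-1))) with ((-(a*(r-1)))*(-(a*(s-1)))) by ring.
      apply Rmult_lt_0_compat; lra. }
    replace ((a*(r-1))*(a*(s-1))) with ((a*a)*((r-1)*(s-1))) in e by ring.
    destruct (Rlt_or_le 0 ((r-1)*(s-1))) as [hh|hh]; auto.
    exfalso. assert ((a*a)*((r-1)*(s-1)) <= 0).
    { rewrite Rmult_comm. apply mul_nonpos_pos; lra. }
    lra. }
  assert (e : 4*a/(s-1) - 4*a/(r-1) = 4 * (a*(r-s)) / ((r-1)*(s-1))) by (field; auto).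
  assert (0 < 4 * (a*(r-s)) / ((r-1)*(s-1))) by (apply Rdiv_lt_0_compat; lra).
  lra.
Qed.

Theorem lemma2p8 (a : R) (ha1 : -1 <= a) (ha2 : a <= 1/3) (ha0 : a <> 0) :
  exists Z : R -> R,
    (forall t, 2*PI/3 < t < PI -> 1 - 4*a*(cos t)^2 <> 0 -> Z t = zfun a t) /\
    (forall t, 2*PI/3 < t < PI -> continuity_pt Z t) /\
    (forall s t, 2*PI/3 < s -> s < t -> t < PI -> Z s < Z t).
Proof.
  exists (Zf a). split; [|split].
  - intros t ht hA. unfold Zf, rr, zfun, zeta.
    apply ident; auto. apply cos_range; auto.
  - intros t ht.
    pose proof (cos_range t ht) as hc.
    destruct (r_facts a (cos t) ha1 ha2 ha0 hc) as [hr0 [hr2 [hE har]]].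
    pose proof (X_pos a (cos t) ha1 ha2 hc) as hX.
    assert (hr1 : sqrt (1 - 4*a + a / (cos t)^2) - 1 <> 0) by (intro H; rewrite H in har; lra).
    apply continuity_pt_filterlim.
    change (continuous (Zf a) t). apply (ex_derive_continuous (Zf a) t).
    unfold Zf, rr, Gp.
    auto_derive.
    assert (hc0 : cos t * (cos t * 1) <> 0).
    { rewrite Rmult_1_r. apply Rmult_integral_contrapositive_currified; destruct hc; lra. }
    unfold Rdiv, Rminus in hX, hr1. simpl in hX, hr1.
    repeat split; auto.
  - intros s t hs hst ht.
    assert (hcs := cos_range s ltac:(lra)).
    assert (hct := cos_range t ltac:(lra)).
    assert (hlt : cos t < cos s).
    { pose proof PI_RGT_0. apply cos_decreasing_1; lra. }
    unfold Zf, rr.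
    apply G_mono with (w := sqrt (1 - 3*a)).
    + apply sqrt_pos.
    + rewrite <- Rsqr_pow2; apply Rsqr_sqrt; lra.
    + apply p_mono; auto.
    + apply p_bound; auto.
Qed.
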